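(* Let $a\ge b\ge2$ be integers, $\beta>1$ the positive root of $\beta^2=a\beta+b$, and $\beta'=a-\beta$. Then for each $n\in\mathbb N$, \[ \inf_{j\in\mathbb Z}P_{\mathbf h(j)}(\beta')\in\Big\{\mu_n+(\beta')^n\tfrac{b-1}{1-(\beta')^2}\,t:\ t\in[\beta',1]\Big\}, \qquad \mu_n=\min_{j\in\{0,1,\dots,b^n-1\}}P_{\mathrm{Pref}_n(\mathbf h(j))}(\beta'). \]
   Context: For an algebraic integer $\beta$, the $\beta$-adic expansion of $x\in\mathbb Z[\beta]$ is the unique infinite word $\mathbf h(x)=u_0u_1u_2\cdots$ with $u_n\in\{0,1,\dots,|N(\beta)|-1\}$ such that $x-\sum_{i=0}^{n-1}u_i\beta^i\in\beta^n\mathbb Z[\beta]$ for all $n\in\mathbb N$; here $|N(\beta)|=b$. $\mathrm{Pref}_n(\mathbf u)$ denotes the prefix of length $n$ of an infinite word $\mathbf u$. For a finite word $w=w_0\cdots w_{k-1}$, $P_w(X)=\sum_{i=0}^{k-1}w_iX^i$; for an infinite word $\mathbf u$, $P_{\mathbf u}(X)=\sum_{i\ge0}u_iX^i$. *)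

(* Defs.v *)
From Stdlib Require Import Reals ZArith Arith List ClassicalEpsilon.
Import ListNotations.
Open Scope R_scope.

Fixpoint psum (u : nat -> nat) (n : nat) (x : R) : R :=
  match n with
  | O => 0
  | S k => psum u k x + INR (u k) * x ^ k
  end.

Fixpoint zpoly_eval (l : list Z) (x : R) : R :=
  match l with
  | [] => 0
  | c :: l' => IZR c + x * zpoly_eval l' x
  end.

Definition in_Zbeta (beta y : R) : Prop := exists l : list Z, y = zpoly_eval l beta.

(* u is a beta-adic expansion of x (digits in {0,...,b-1}, b = |N(beta)|) *)
Definition is_expansion (beta : R) (b : nat) (x : R) (u : nat -> nat) : Prop :=
  (forall n, (u n < b)%nat) /\
  (forall n, exists z, in_Zbeta beta z /\ x - psum u n beta = beta ^ n * z).

(* h(x): the (unique) beta-adic expansion of x *)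
Definition h (beta : R) (b : nat) (x : R) : nat -> nat :=
  epsilon (inhabits (fun _ => 0%nat)) (is_expansion beta b x).

Definition mu (beta : R) (b n : nat) (x : R) : R :=
  fold_right Rmin (psum (h beta b 0) n x)
    (map (fun j => psum (h beta b (INR j)) n x) (seq 0 (Nat.pow b n))).

Definition is_inf (E : R -> Prop) (m : R) : Prop :=
  (forall y, E y -> m <= y) /\
  (forall m', (forall y, E y -> m' <= y) -> m' <= m).

(* Main.v *)
Require Import Defs.
From Stdlib Require Import Reals ZArith Arith List Lra Lia ClassicalEpsilon.
Import ListNotations.
Open Scope R_scope.

Lemma beta_bounds (a b : nat) (beta : R)
  (hb : (2 <= b)%nat) (hab : (b <= a)%nat)
  (hbeta : 1 < beta) (hroot : beta ^ 2 = INR a * beta + INR b) :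
  INR a < beta /\ beta < INR a + 1 /\ INR b < beta.
Proof.
  assert (Hb : 2 <= INR b) by (replace 2 with (INR 2) by (simpl; lra); apply le_INR; lia).
  assert (Hab : INR b <= INR a) by (apply le_INR; lia).
  simpl in hroot.
  assert (INR a < beta) by nra.
  split; [exact H|]. split; nra.
Qed.

Lemma irrat (a b : nat) (beta : R)
  (hb : (2 <= b)%nat) (hab : (b <= a)%nat)
  (hbeta : 1 < beta) (hroot : beta ^ 2 = INR a * beta + INR b) :
  forall p q : Z, IZR p + IZR q * beta = 0 -> q = 0%Z.
Proof.
  intros p q Hpq.
  destruct (beta_bounds a b beta hb hab hbeta hroot) as [B1 [B2 _]].
  destruct (Z.eq_dec q 0) as [|Hq]; [assumption|exfalso].
  set (g := Z.gcd p q).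
  assert (Hg : g <> 0%Z) by (intro E; apply Z.gcd_eq_0 in E; lia).
  destruct (Z.gcd_divide_l p q) as [k Hk].
  destruct (Z.gcd_divide_r p q) as [l Hl].
  fold g in Hk, Hl.
  assert (Hkd : (p / g)%Z = k) by (rewrite Hk; apply Z.div_mul; exact Hg).
  assert (Hld : (q / g)%Z = l) by (rewrite Hl; apply Z.div_mul; exact Hg).
  assert (Hgcd : Z.gcd k l = 1%Z) by (rewrite <- Hkd, <- Hld; apply Z.gcd_div_gcd; auto).
  assert (Hl0 : l <> 0%Z) by (intro E; rewrite E in Hl; lia).
  assert (Hkl : IZR k + IZR l * beta = 0).
  { rewrite Hk, Hl, !mult_IZR in Hpq.
    assert (IZR g <> 0) by (apply not_0_IZR; exact Hg).
    apply (Rmult_eq_reg_r (IZR g)); [lra|exact H]. }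
  assert (HZ : (k*k + Z.of_nat a*k*l - Z.of_nat b*l*l = 0)%Z).
  { apply eq_IZR. rewrite minus_IZR, plus_IZR, !mult_IZR, <- !INR_IZR_INZ.
    assert (E : IZR k = - IZR l * beta) by lra. rewrite E. simpl in hroot.
    replace (- IZR l * beta * (- IZR l * beta)) with (IZR l * IZR l * (beta*(beta*1))) by ring.
    rewrite hroot. ring. }
  assert (Hdiv : (l | k * k)%Z).
  { exists (Z.of_nat b * l - Z.of_nat a * k)%Z. lia. }
  rewrite Z.gcd_comm in Hgcd.
  pose proof (Z.gauss _ _ _ Hdiv Hgcd) as Hlk.
  assert (Hl1 : (l | 1)%Z).
  { rewrite <- Hgcd. apply Z.gcd_greatest; [apply Z.divide_refl|exact Hlk]. }
  apply Z.divide_1_r in Hl1.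
  assert (Hm : beta = IZR (- k * l)).
  { rewrite mult_IZR, opp_IZR.
    destruct Hl1 as [E|E]; rewrite E in *; simpl in *; lra. }
  rewrite Hm in B1, B2. rewrite INR_IZR_INZ in B1, B2.
  apply lt_IZR in B1.
  replace (IZR (Z.of_nat a) + 1) with (IZR (Z.of_nat a + 1)) in B2 by (rewrite plus_IZR; reflexivity).
  apply lt_IZR in B2. lia.
Qed.

Definition ZB (beta y : R) : Prop := exists p q : Z, y = IZR p + IZR q * beta.

Lemma ZB_int beta (k : Z) : ZB beta (IZR k).
Proof. exists k, 0%Z. ring. Qed.
Lemma ZB_nat beta (k : nat) : ZB beta (INR k).
Proof. rewrite INR_IZR_INZ. apply ZB_int. Qed.
Lemma ZB_beta beta : ZB beta beta.
Proof. exists 0%Z, 1%Z. ring. Qed.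
Lemma ZB_add beta x y : ZB beta x -> ZB beta y -> ZB beta (x + y).
Proof. intros [p [q ->]] [r [s ->]]. exists (p+r)%Z, (q+s)%Z. rewrite !plus_IZR. ring. Qed.
Lemma ZB_opp beta x : ZB beta x -> ZB beta (- x).
Proof. intros [p [q ->]]. exists (-p)%Z, (-q)%Z. rewrite !opp_IZR. ring. Qed.
Lemma ZB_sub beta x y : ZB beta x -> ZB beta y -> ZB beta (x - y).
Proof. intros. apply ZB_add; auto. apply ZB_opp; auto. Qed.
Lemma ZB_mul (a b : nat) beta (hroot : beta ^ 2 = INR a * beta + INR b) x y :
  ZB beta x -> ZB beta y -> ZB beta (x * y).
Proof.
  intros [p [q ->]] [r [s ->]].
  exists (p*r + q*s*Z.of_nat b)%Z, (p*s + q*r + q*s*Z.of_nat a)%Z.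
  rewrite !plus_IZR, !mult_IZR, <- !INR_IZR_INZ. simpl in hroot.
  replace ((IZR p + IZR q * beta) * (IZR r + IZR s * beta)) with
    (IZR p * IZR r + (IZR p * IZR s + IZR q * IZR r) * beta + IZR q * IZR s * (beta * (beta * 1))) by ring.
  rewrite hroot. ring.
Qed.
Lemma ZB_pow (a b : nat) beta (hroot : beta ^ 2 = INR a * beta + INR b) x n :
  ZB beta x -> ZB beta (x ^ n).
Proof.
  intros Hx. induction n; simpl. apply (ZB_int beta 1). apply (ZB_mul a b); auto.
Qed.

Lemma ZB_in_Zbeta beta y : ZB beta y -> in_Zbeta beta y.
Proof. intros [p [q ->]]. exists [p; q]. simpl. ring. Qed.
Lemma in_Zbeta_ZB (a b : nat) beta (hroot : beta ^ 2 = INR a * beta + INR b) y :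
  in_Zbeta beta y -> ZB beta y.
Proof.
  intros [l ->]. induction l as [|c l IH]; simpl.
  apply (ZB_int beta 0). apply ZB_add. apply ZB_int. apply (ZB_mul a b); auto. apply ZB_beta.
Qed.

Lemma psum_ext u v n x : (forall i, (i < n)%nat -> u i = v i) -> psum u n x = psum v n x.
Proof.
  induction n; simpl; intros H; auto. rewrite IHn by (intros; apply H; lia). rewrite H by lia. ring.
Qed.

Lemma psum_split u n k x :
  psum u (n + k) x = psum u n x + x ^ n * psum (fun i => u (n + i)%nat) k x.
Proof.
  induction k; simpl. rewrite Nat.add_0_r. ring.
  rewrite Nat.add_succ_r. simpl. rewrite IHk, pow_add. ring.
Qed.

Lemma psum_shift u n x :
  psum u (S n) x = INR (u O) + x * psum (fun i => u (S i)) n x.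
Proof.
  change (S n) with (1 + n)%nat. rewrite psum_split. simpl. ring.
Qed.

Lemma ZB_psum (a b : nat) beta (hroot : beta ^ 2 = INR a * beta + INR b) u n :
  ZB beta (psum u n beta).
Proof.
  induction n; simpl. apply (ZB_int beta 0). apply ZB_add; auto.
  apply (ZB_mul a b); auto. apply ZB_nat. apply (ZB_pow a b); auto. apply ZB_beta.
Qed.

Lemma div_b (a b : nat) (beta : R)
  (hb : (2 <= b)%nat) (hab : (b <= a)%nat)
  (hbeta : 1 < beta) (hroot : beta ^ 2 = INR a * beta + INR b) :
  forall (k : Z) z, ZB beta z -> IZR k = beta * z -> (Z.of_nat b | k)%Z.
Proof.
  intros k z [p [q ->]] Hk.
  assert (E : IZR (k - q * Z.of_nat b) + IZR (- (p + q * Z.of_nat a)) * beta = 0).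
  { rewrite minus_IZR, opp_IZR, plus_IZR, !mult_IZR, <- !INR_IZR_INZ, Hk.
    simpl in hroot.
    replace (beta * (IZR p + IZR q * beta)) with (IZR p * beta + IZR q * (beta*(beta*1))) by ring.
    rewrite hroot. ring. }
  apply (irrat a b beta hb hab hbeta hroot) in E.
  assert (E2 : IZR (k - q * Z.of_nat b) = 0).
  { assert (H0 : IZR (- (p + q * Z.of_nat a)) = 0) by (rewrite E; reflexivity).
    rewrite minus_IZR, mult_IZR, <- INR_IZR_INZ, Hk.
    rewrite opp_IZR, plus_IZR, mult_IZR, <- INR_IZR_INZ in H0.
    simpl in hroot.
    replace (beta * (IZR p + IZR q * beta)) with (IZR p * beta + IZR q * (beta*(beta*1))) by ring.
    rewrite hroot. nra. }
  apply eq_IZR in E2. exists q. lia.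
Qed.

Lemma uniq_prefix (a b : nat) (beta : R)
  (hb : (2 <= b)%nat) (hab : (b <= a)%nat)
  (hbeta : 1 < beta) (hroot : beta ^ 2 = INR a * beta + INR b) :
  forall n u v w, (forall i, (u i < b)%nat) -> (forall i, (v i < b)%nat) -> ZB beta w ->
  psum u n beta - psum v n beta = beta ^ n * w -> forall i, (i < n)%nat -> u i = v i.
Proof.
  induction n as [|n IH]; intros u v w Hu Hv Hw E i Hi; [lia|].
  rewrite !psum_shift in E.
  set (du := psum (fun i => u (S i)) n beta) in *.
  set (dv := psum (fun i => v (S i)) n beta) in *.
  assert (Hdiv : (Z.of_nat b | Z.of_nat (u O) - Z.of_nat (v O))%Z).
  { apply (div_b a b beta hb hab hbeta hroot _ (beta ^ n * w - (du - dv))).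
    - apply ZB_sub. apply (ZB_mul a b); auto. apply (ZB_pow a b); auto. apply ZB_beta.
      apply ZB_sub; apply (ZB_psum a b); auto.
    - rewrite minus_IZR, <- !INR_IZR_INZ. simpl in E. lra. }
  assert (H0 : u O = v O).
  { destruct Hdiv as [m Hm]. pose proof (Hu O). pose proof (Hv O).
    assert (m = 0%Z) by nia. subst m. lia. }
  assert (E' : du - dv = beta ^ n * w).
  { rewrite H0 in E. simpl in E. apply (Rmult_eq_reg_l beta); [|lra]. lra. }
  destruct i as [|i]; [exact H0|].
  apply (IH (fun i => u (S i)) (fun i => v (S i)) w); auto. lia.
Qed.

Definition step (B A : Z) (pq : Z * Z) : Z * Z :=
  let (p, q) := pq in ((q - A * (p / B))%Z, (p / B)%Z).

Fixpoint st (B A : Z) (pq : Z * Z) (n : nat) : Z * Z :=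
  match n with O => pq | S k => step B A (st B A pq k) end.

Lemma exists_expansion (a b : nat) (beta : R)
  (hb : (2 <= b)%nat) (hroot : beta ^ 2 = INR a * beta + INR b) :
  forall x, ZB beta x -> exists u, is_expansion beta b x u.
Proof.
  intros x [p [q Hx]].
  set (B := Z.of_nat b). set (A := Z.of_nat a).
  assert (HB : (0 < B)%Z) by (unfold B; lia).
  exists (fun n => Z.to_nat ((fst (st B A (p, q) n)) mod B)).
  assert (Hinv : forall n, x - psum (fun n => Z.to_nat ((fst (st B A (p, q) n)) mod B)) n beta
     = beta ^ n * (IZR (fst (st B A (p, q) n)) + IZR (snd (st B A (p, q) n)) * beta)).
  { induction n as [|n IH]; simpl. rewrite Hx. ring.
    destruct (st B A (p, q) n) as [p' q'] eqn:Est. simpl in *.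
    rewrite INR_IZR_INZ, Z2Nat.id by (apply Z.mod_pos_bound; exact HB).
    assert (Dm := Z.div_mod p' B ltac:(lia)).
    replace (x - (psum (fun n0 : nat => Z.to_nat (fst (st B A (p, q) n0) mod B)) n beta +
      IZR (p' mod B) * beta ^ n)) with
      (beta ^ n * (IZR p' + IZR q' * beta) - IZR (p' mod B) * beta ^ n) by (rewrite <- IH; ring).
    assert (IZR p' = IZR B * IZR (p' / B) + IZR (p' mod B)) by (rewrite <- mult_IZR, <- plus_IZR; f_equal; exact Dm).
    rewrite H, minus_IZR, mult_IZR. unfold B, A. rewrite <- !INR_IZR_INZ. simpl in hroot.
    replace (beta * (beta ^ n * (IZR q' - INR a * IZR (p' / Z.of_nat b) + IZR (p' / Z.of_nat b) * beta)))
      with (beta ^ n * (beta * IZR q' - INR a * beta * IZR (p' / Z.of_nat b) + IZR (p' / Z.of_nat b) * (beta * (beta*1)))) by ring.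
    ring_simplify. replace (beta^2) with (INR a * beta + INR b) by (simpl; lra). ring. }
  split.
  - intros n. assert (Hm := Z.mod_pos_bound (fst (st B A (p, q) n)) B HB). unfold B in *. lia.
  - intros n. exists (IZR (fst (st B A (p, q) n)) + IZR (snd (st B A (p, q) n)) * beta).
    split; [apply ZB_in_Zbeta; eexists; eexists; reflexivity| apply Hinv].
Qed.

Lemma h_spec (a b : nat) (beta : R)
  (hb : (2 <= b)%nat) (hroot : beta ^ 2 = INR a * beta + INR b) x :
  ZB beta x -> is_expansion beta b x (h beta b x).
Proof.
  intros Hx. unfold h. apply epsilon_spec. apply (exists_expansion a b); auto.
Qed.

Lemma tail_bound (b : nat) x (hx : -1 < x < 0) (hb : (1 <= b)%nat) :
  forall N d, (forall i, (d i < b)%nat) ->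
  (INR b - 1) / (1 - x^2) * x <= psum d N x <= (INR b - 1) / (1 - x^2).
Proof.
  set (c := (INR b - 1) / (1 - x^2)).
  assert (Hc1 : c * (1 - x^2) = INR b - 1) by (unfold c; field; simpl; nra).
  assert (Hb1 : 1 <= INR b) by (replace 1 with (INR 1) by reflexivity; apply le_INR; lia).
  assert (Hc : 0 <= c) by (unfold c; apply Rmult_le_pos; [lra|]; apply Rlt_le, Rinv_0_lt_compat; simpl; nra).
  induction N as [|N IH]; intros d Hd.
  - simpl. nra.
  - rewrite psum_shift. destruct (IH (fun i => d (S i))) as [L U]; [intros; apply Hd|].
    set (T := psum (fun i => d (S i)) N x) in *.
    assert (H0 : 0 <= INR (d O)) by apply pos_INR.
    assert (H1 : INR (d O) <= INR b - 1).
    { assert (INR (d O) + 1 <= INR b); [|lra].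
      replace (INR (d O) + 1) with (INR (S (d O))) by (rewrite S_INR; ring).
      apply le_INR. apply Hd. }
    assert (P1 : (T - c) * x >= 0) by nra.
    assert (P2 : (T - c * x) * x <= 0) by nra.
    simpl in Hc1. split; nra.
Qed.

Lemma sum_psum u x N : sum_f_R0 (fun i => INR (u i) * x ^ i) N = psum u (S N) x.
Proof. induction N; simpl. ring. rewrite IHN. simpl. ring. Qed.

Lemma cv_le (s : nat -> R) y M n0 :
  infinite_sum s y -> (forall N, (N >= n0)%nat -> sum_f_R0 s N <= M) -> y <= M.
Proof.
  intros Hs HM. destruct (Rle_dec y M) as [|Hn]; [assumption|exfalso]. apply Rnot_le_lt in Hn.
  destruct (Hs (y - M)) as [N0 HN0]; [lra|].
  specialize (HN0 (Nat.max N0 n0) (Nat.le_max_l _ _)). specialize (HM (Nat.max N0 n0) (Nat.le_max_r _ _)).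
  unfold Rdist in HN0. apply Rabs_def2 in HN0. lra.
Qed.

Lemma cv_ge (s : nat -> R) y M n0 :
  infinite_sum s y -> (forall N, (N >= n0)%nat -> M <= sum_f_R0 s N) -> M <= y.
Proof.
  intros Hs HM. destruct (Rle_dec M y) as [|Hn]; [assumption|exfalso]. apply Rnot_le_lt in Hn.
  destruct (Hs (M - y)) as [N0 HN0]; [lra|].
  specialize (HN0 (Nat.max N0 n0) (Nat.le_max_l _ _)). specialize (HM (Nat.max N0 n0) (Nat.le_max_r _ _)).
  unfold Rdist in HN0. apply Rabs_def2 in HN0. lra.
Qed.

Lemma series_bound (b : nat) x (hx : -1 < x < 0) (hb : (1 <= b)%nat) u y n :
  (forall i, (u i < b)%nat) ->
  infinite_sum (fun i => INR (u i) * x ^ i) y ->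
  psum u n x + Rmin (x^n * ((INR b - 1) / (1 - x^2)) * x) (x^n * ((INR b - 1) / (1 - x^2))) <= y
  <= psum u n x + Rmax (x^n * ((INR b - 1) / (1 - x^2)) * x) (x^n * ((INR b - 1) / (1 - x^2))).
Proof.
  intros Hu Hy.
  set (c := (INR b - 1) / (1 - x^2)) in *.
  assert (Hfin : forall N, (N >= n)%nat ->
    psum u n x + Rmin (x^n * c * x) (x^n * c) <= sum_f_R0 (fun i => INR (u i) * x ^ i) N
    <= psum u n x + Rmax (x^n * c * x) (x^n * c)).
  { intros N HN. rewrite sum_psum. replace (S N) with (n + (S N - n))%nat by lia.
    rewrite psum_split.
    destruct (tail_bound b x hx hb (S N - n) (fun i => u (n + i)%nat)) as [L U]; [intros; apply Hu|].
    fold c in L, U.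
    set (T := psum (fun i : nat => u (n + i)%nat) (S N - n) x) in *.
    assert (Hc0 : 0 <= c).
    { unfold c. assert (1 <= INR b) by (replace 1 with (INR 1) by reflexivity; apply le_INR; lia).
      apply Rmult_le_pos; [lra|]; apply Rlt_le, Rinv_0_lt_compat; simpl; nra. }
    assert (Hv : forall A B v, (A <= v <= B \/ B <= v <= A) -> Rmin A B <= v <= Rmax A B).
    { intros A B v [[? ?]|[? ?]]; unfold Rmin, Rmax; destruct (Rle_dec A B); lra. }
    assert (Hw : x ^ n * c * x <= x ^ n * T <= x ^ n * c \/ x ^ n * c <= x ^ n * T <= x ^ n * c * x).
    { destruct (Rle_dec 0 (x^n)); [left|right]; split; nra. }
    apply Hv in Hw. lra. }
  split.
  - apply (cv_ge _ _ _ n Hy). intros; apply Hfin; auto.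
  - apply (cv_le _ _ _ n Hy). intros; apply Hfin; auto.
Qed.

Lemma series_exists (b : nat) x (hx : -1 < x < 0) (hb : (1 <= b)%nat) u :
  (forall i, (u i < b)%nat) -> exists y, infinite_sum (fun i => INR (u i) * x ^ i) y.
Proof.
  intros Hu.
  set (c := (INR b - 1) / (1 - x^2)).
  assert (Hc : forall N k, Rabs (psum u (N + k) x - psum u N x) <= Rabs (x ^ N) * c).
  { intros N k. rewrite psum_split.
    destruct (tail_bound b x hx hb k (fun i => u (N + i)%nat)) as [L U]; [intros; apply Hu|].
    fold c in L, U.
    replace (psum u N x + x ^ N * psum (fun i : nat => u (N + i)%nat) k x - psum u N x)
      with (x ^ N * psum (fun i : nat => u (N + i)%nat) k x) by ring.
    rewrite Rabs_mult. apply Rmult_le_compat_l; [apply Rabs_pos|].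
    apply Rabs_le. nra. }
  assert (Hc0 : 0 <= c).
  { unfold c. assert (1 <= INR b) by (replace 1 with (INR 1) by reflexivity; apply le_INR; lia).
    apply Rmult_le_pos; [lra|]; apply Rlt_le, Rinv_0_lt_compat; simpl; nra. }
  assert (HC : Cauchy_crit (fun N => sum_f_R0 (fun i => INR (u i) * x ^ i) N)).
  { intros eps Heps.
    destruct (pow_lt_1_zero x ltac:(apply Rabs_def1; lra) (eps / (2 * (c + 1)))) as [N0 HN0].
    { apply Rdiv_lt_0_compat; lra. }
    exists N0. intros m k Hm Hk. unfold Rdist. rewrite !sum_psum.
    assert (E1 := Hc N0 (S m - N0)%nat). assert (E2 := Hc N0 (S k - N0)%nat).
    replace (N0 + (S m - N0))%nat with (S m) in E1 by lia.
    replace (N0 + (S k - N0))%nat with (S k) in E2 by lia.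
    assert (E3 := HN0 N0 (le_n _)).
    assert (E4 : Rabs (x ^ N0) * c <= eps / (2 * (c + 1)) * c).
    { apply Rmult_le_compat_r; lra. }
    assert (E5 : eps / (2 * (c + 1)) * c < eps / 2).
    { unfold Rdiv. apply Rmult_lt_reg_r with (2 * (c + 1)); [lra|].
      field_simplify; [nra|lra]. }
    replace (psum u (S m) x - psum u (S k) x) with
      ((psum u (S m) x - psum u N0 x) - (psum u (S k) x - psum u N0 x)) by ring.
    eapply Rle_lt_trans; [apply Rabs_triang|]. rewrite Rabs_Ropp. lra. }
  destruct (R_complete _ HC) as [y Hy]. exists y. exact Hy.
Qed.

Lemma fold_min (l : list R) (i : R) :
  fold_right Rmin i l <= i /\ (forall z, In z l -> fold_right Rmin i l <= z) /\
  (fold_right Rmin i l = i \/ In (fold_right Rmin i l) l).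
Proof.
  induction l as [|c l [IH1 [IH2 IH3]]]; simpl.
  - split; [lra|]. split; [tauto|auto].
  - split; [|split].
    + eapply Rle_trans; [apply Rmin_r|exact IH1].
    + intros z [<-|Hz]. apply Rmin_l. eapply Rle_trans; [apply Rmin_r|auto].
    + destruct (Rle_dec c (fold_right Rmin i l)) as [Hl|Hl].
      * rewrite Rmin_left by exact Hl. right; left; reflexivity.
      * rewrite Rmin_right by lra. destruct IH3 as [E|E]; [left; exact E|right; right; exact E].
Qed.

Theorem proposition4 (a b : nat) (beta : R)
  (hb : (2 <= b)%nat) (hab : (b <= a)%nat)
  (hbeta : 1 < beta) (hroot : beta ^ 2 = INR a * beta + INR b)
  (n : nat) :
  exists t : R, INR a - beta <= t <= 1 /\
    is_inf (fun y => exists j : Z,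
               infinite_sum (fun i => INR (h beta b (IZR j) i) * (INR a - beta) ^ i) y)
           (mu beta b n (INR a - beta)
            + (INR a - beta) ^ n * ((INR b - 1) / (1 - (INR a - beta) ^ 2)) * t).
Proof.
  destruct (beta_bounds a b beta hb hab hbeta hroot) as [B1 [B2 B3]].
  set (x := INR a - beta).
  assert (hx : -1 < x < 0) by (unfold x; lra).
  assert (hb1 : (1 <= b)%nat) by lia.
  set (c := (INR b - 1) / (1 - x ^ 2)).
  assert (Hc : 0 < c).
  { unfold c. assert (2 <= INR b) by (replace 2 with (INR 2) by (simpl; lra); apply le_INR; lia).
    apply Rmult_lt_0_compat; [lra|]; apply Rinv_0_lt_compat; simpl; nra. }
  set (K := x ^ n * c).
  assert (HK : K <> 0) by (unfold K; apply Rmult_integral_contrapositive; split; [apply pow_nonzero|]; lra).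
  set (M := mu beta b n x).
  set (E := fun y => exists j : Z, infinite_sum (fun i => INR (h beta b (IZR j) i) * x ^ i) y).
  assert (Hexp : forall j : Z, is_expansion beta b (IZR j) (h beta b (IZR j))).
  { intros j. apply (h_spec a b); auto. apply ZB_int. }
  assert (Hdig : forall j : Z, forall i, (h beta b (IZR j) i < b)%nat) by (intros j; apply Hexp).
  assert (Hbn : (0 < Nat.pow b n)%nat) by (apply Nat.neq_0_lt_0, Nat.pow_nonzero; lia).
  destruct (fold_min (map (fun j => psum (h beta b (INR j)) n x) (seq 0 (Nat.pow b n)))
    (psum (h beta b 0) n x)) as [M1 [M2 M3]].
  fold (mu beta b n x) in M1, M2, M3. fold M in M1, M2, M3.
  assert (Hj0 : exists j0 : nat, M = psum (h beta b (IZR (Z.of_nat j0))) n x).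
  { destruct M3 as [e|e].
    - exists O. exact e.
    - apply in_map_iff in e. destruct e as [j0 [e _]]. exists j0. rewrite <- INR_IZR_INZ. auto. }
  destruct Hj0 as [j0 Hj0].
  assert (Hlow : forall y, E y -> M + Rmin (K * x) K <= y).
  { intros y [j Hy].
    pose proof (series_bound b x hx hb1 _ y n (Hdig j) Hy) as [L _]. fold c in L. fold K in L.
    set (Mz := Z.of_nat (Nat.pow b n)).
    assert (HMz : (0 < Mz)%Z) by (unfold Mz; lia).
    set (j' := (j mod Mz)%Z).
    assert (Hj' := Z.mod_pos_bound j Mz HMz). fold j' in Hj'.
    set (jn := Z.to_nat j').
    assert (Hjn : INR jn = IZR j') by (unfold jn; rewrite INR_IZR_INZ, Z2Nat.id by lia; reflexivity).
    assert (Heq : psum (h beta b (IZR j)) n x = psum (h beta b (INR jn)) n x).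
    { apply psum_ext. rewrite Hjn.
      destruct (Hexp j) as [_ Hz1]. destruct (Hexp j') as [_ Hz2].
      destruct (Hz1 n) as [z1 [Iz1 Ez1]]. destruct (Hz2 n) as [z2 [Iz2 Ez2]].
      apply (uniq_prefix a b beta hb hab hbeta hroot n _ _
        ((beta - INR a) ^ n * IZR (j / Mz) - z1 + z2)); auto.
      - apply ZB_add. apply ZB_sub. apply (ZB_mul a b); auto. apply (ZB_pow a b); auto.
        apply ZB_sub. apply ZB_beta. apply ZB_nat. apply ZB_int.
        apply (in_Zbeta_ZB a b); auto. apply (in_Zbeta_ZB a b); auto.
      - assert (Dj : IZR j = IZR j' + IZR Mz * IZR (j / Mz)).
        { rewrite <- mult_IZR, <- plus_IZR. f_equal. pose proof (Z.div_mod j Mz ltac:(lia)). unfold j'. lia. }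
        assert (HMzr : IZR Mz = beta ^ n * (beta - INR a) ^ n).
        { unfold Mz. rewrite <- INR_IZR_INZ, pow_INR, <- Rpow_mult_distr. f_equal.
          simpl in hroot. lra. }
        rewrite HMzr in Dj. lra. }
    assert (HM : M <= psum (h beta b (INR jn)) n x).
    { apply M2. apply in_map_iff. exists jn. split; [reflexivity|]. apply in_seq. split; [lia|].
      unfold jn. simpl. unfold Mz in Hj'. lia. }
    lra. }
  destruct (series_exists b x hx hb1 _ (Hdig (Z.of_nat j0))) as [ys Hys].
  assert (HysE : E ys) by (exists (Z.of_nat j0); exact Hys).
  assert (Hup : ys <= M + Rmax (K * x) K).
  { pose proof (series_bound b x hx hb1 _ ys n (Hdig (Z.of_nat j0)) Hys) as [_ U].
    fold c in U. fold K in U. rewrite Hj0. exact U. }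
  destruct (completeness (fun z => E (- z))) as [s [Hs1 Hs2]].
  { exists (- (M + Rmin (K * x) K)). intros z Hz. apply Hlow in Hz. lra. }
  { exists (- ys). cbv beta. rewrite Ropp_involutive. exact HysE. }
  assert (Hinf : is_inf E (- s)).
  { split.
    - intros y Hy. assert (y' := Hs1 (- y) ltac:(cbv beta; rewrite Ropp_involutive; exact Hy)). lra.
    - intros m' Hm'. assert (s <= - m'); [|lra].
      apply Hs2. intros z Hz. apply Hm' in Hz. lra. }
  assert (Hs_low : M + Rmin (K * x) K <= - s).
  { apply Hinf. exact Hlow. }
  assert (Hs_up : - s <= ys) by (apply Hinf; exact HysE).
  exists ((- s - M) / K). split.
  - fold x. unfold Rmin, Rmax in *.
    destruct (Rle_dec (K * x) K); destruct (Rlt_dec 0 K).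
    + split; apply (Rmult_le_reg_l K); auto; field_simplify; auto; lra.
    + assert (K < 0) by lra. split; apply (Rmult_le_reg_r (- K)); try lra.
      * replace ((- s - M) / K * - K) with (- (- s - M)) by (field; auto). nra.
      * replace ((- s - M) / K * - K) with (- (- s - M)) by (field; auto). nra.
    + exfalso. nra.
    + assert (K < 0) by lra. split; apply (Rmult_le_reg_r (- K)); try lra.
      * replace ((- s - M) / K * - K) with (- (- s - M)) by (field; auto). nra.
      * replace ((- s - M) / K * - K) with (- (- s - M)) by (field; auto). nra.
  - fold x. fold c. fold M. fold K. replace (M + K * ((- s - M) / K)) with (- s) by (field; auto).
    exact Hinf.
Qed.
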